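(* On the probability space $((0,1),\mathcal{B},\mathcal{L})$ ($\mathcal{B}$ the Borel $\sigma$-algebra, $\mathcal{L}$ Lebesgue measure), the digit sequence $\{d_n\}_{n\ge1}$ of the signed Engel expansion (defined on the irrationals, a set of full measure) is a time-homogeneous Markov chain with initial distribution $$\mathcal{L}(d_1=2k)=\frac{2}{(2k-1)(2k+1)},\qquad k\in\mathbb{N},$$ and one-step transition probabilities, for $k,l\in\mathbb{N}$ with $l\ge k$, $$\mathcal{L}(d_{n+1}=2l\mid d_n=2k)=\begin{cases}\frac{1}{2k},& l=k,\\ \frac{(2k-1)(2k+1)}{k(2l-1)(2l+1)},& l\ge k+1.\end{cases}$$
   Context: Define $T\colon[0,1)\to[0,1)$ by: for $k\in\mathbb{N}$, $Tx=\lceil 1/x\rceil x-1$ if $x\in(\frac{1}{2k},\frac{1}{2k-1})$; $Tx=1-\lfloor 1/x\rfloor x$ if $x\in(\frac{1}{2k+1},\frac{1}{2k})$; $Tx=0$ if $x\in\{0\}\cup\{1/n\colon n\ge 2\}$. For $x\in(0,1)$, $d_1(x)=\lceil 1/x\rceil$ if $x\in[\frac{1}{2k},\frac{1}{2k-1})$ for some $k\in\mathbb{N}$, and $d_1(x)=\lfloor 1/x\rfloor$ if $x\in[\frac{1}{2k+1},\frac{1}{2k})$ for some $k\in\mathbb{N}$; $d_{n+1}(x)=d_1(T^nx)$. For irrational $x$ all $d_n(x)$ are even positive integers. *)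

(* Defs.v *)
From HB Require Import structures.
From mathcomp Require Import all_boot all_order all_algebra.
From mathcomp Require Import all_classical all_reals all_analysis.
Set Implicit Arguments. Unset Strict Implicit. Unset Printing Implicit Defensive.
Import Order.TTheory GRing.Theory Num.Theory.
Local Open Scope classical_set_scope.
Local Open Scope ring_scope.

Section SignedEngel.
Variable R : realType.

(* The map T : [0,1) -> [0,1) of the signed Engel expansion.
   For x in (0,1) with 1/x not an integer, let m = floor(1/x) >= 1.
   x in (1/(2k), 1/(2k-1))  <=>  1/x in (2k-1, 2k)  <=> m = 2k-1 is odd,
     and then Tx = ceil(1/x) x - 1;
   x in (1/(2k+1), 1/(2k))  <=>  1/x in (2k, 2k+1)  <=> m = 2k is even,
     and then Tx = 1 - floor(1/x) x;
   Tx = 0 for x = 0 and x = 1/n (n >= 2). *)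
Definition T (x : R) : R :=
  if (x == 0) || (x^-1 \is a Num.int) then 0
  else if odd `|Num.floor x^-1|%N
       then (Num.ceil x^-1)%:~R * x - 1
       else 1 - (Num.floor x^-1)%:~R * x.

(* d_1(x) = ceil(1/x) if x in [1/(2k), 1/(2k-1)) (i.e. 1/x in (2k-1,2k],
   exactly when ceil(1/x) is even), and d_1(x) = floor(1/x) if
   x in [1/(2k+1), 1/(2k)) (i.e. 1/x in (2k, 2k+1], when ceil(1/x) is odd). *)
Definition d1 (x : R) : int :=
  if ~~ odd `|Num.ceil x^-1|%N then Num.ceil x^-1 else Num.floor x^-1.

(* d n x = d_n(x) for n >= 1: d_{n+1}(x) = d_1(T^n x). *)
Definition digit (n : nat) (x : R) : int := d1 (iter n.-1 T x).

Definition irrational (x : R) : Prop := ~ exists q : rat, x = ratr q.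
Definition Omega : set R := [set x | 0 < x < 1 /\ irrational x].

Definition dEvent (n : nat) (m : int) : set R :=
  [set x | Omega x /\ digit n x = m].

Definition cylinder (n : nat) (a : nat -> int) : set R :=
  [set x | Omega x /\ forall i, (1 <= i <= n)%N -> digit i x = a i].

(* Lebesgue probability (real-valued; all events here are in (0,1)). *)
Definition Prob (A : set R) : R := fine (lebesgue_measure A).

Definition condProb (A B : set R) : R := Prob (A `&` B) / Prob B.

End SignedEngel.

Arguments T : clear implicits.
Arguments d1 : clear implicits.
Arguments digit : clear implicits.
Arguments Omega : clear implicits.
Arguments dEvent : clear implicits.
Arguments cylinder : clear implicits.
Arguments Prob : clear implicits.
Arguments condProb : clear implicits.

(* Main.v *)
Require Import Defs.
From HB Require Import structures.
From mathcomp Require Import all_boot all_order all_algebra.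
From mathcomp Require Import all_classical all_reals all_analysis.
From mathcomp Require Import ring lra.
Import Order.TTheory GRing.Theory Num.Theory.
Local Open Scope classical_set_scope.
Local Open Scope ring_scope.

Section S.
Variable R : realType.

Lemma fl_between (n : nat) (y : R) : n%:R < y < n.+1%:R ->
  Num.floor y = n%:Z /\ Num.ceil y = n.+1%:Z /\ ~~ (y \is a Num.int).
Proof.
move=> /andP[h1 h2].
have fl : Num.floor y = n%:Z.
  apply: floor_def; have -> : (n%:Z + 1 = n.+1%:Z) by rewrite -addn1 PoszD.
  by apply/andP; split; [exact: ltW | exact: h2].
split=> //; split.
  apply: ceil_def; have -> : (n.+1%:Z - 1 = n%:Z) by rewrite -addn1 PoszD addrK.
  by apply/andP; split; [exact: h1 | exact: ltW].
rewrite intrEfloor fl; apply/negP=> /eqP e.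
by move: h1; rewrite -e ltxx.
Qed.
End S.

Section S.
Variable R : realType.

Lemma inv_between (n : nat) (x : R) : (n.+1%:R)^-1 < x < (n%:R)^-1 -> (0 < n)%N ->
  0 < x /\ n%:R < x^-1 < n.+1%:R.
Proof.
move=> /andP[h1 h2] n0.
have x0 : 0 < x by apply: lt_trans h1; rewrite invr_gt0 ltr0n.
split=> //.
rewrite -[x]invrK in h1 h2.
rewrite ltf_pV2 ?posrE ?invr_gt0 ?ltr0n // in h1.
rewrite ltf_pV2 ?posrE ?invr_gt0 ?ltr0n // in h2.
by rewrite h1 h2.
Qed.

Lemma PL (k : nat) (x : R) : (0 < k)%N -> (2*k%:R)^-1 < x < (2*k%:R - 1)^-1 ->
  T R x = 2*k%:R * x - 1 /\ d1 R x = (2*k)%:Z.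
Proof.
case: k => // k _.
have e1 : (2 * k.+1%:R - 1 : R) = (2*k).+1%:R.
  by rewrite -natrM mulnSr addn2 -addn1 natrD addrK.
have e2 : (2 * k.+1%:R : R) = (2*k).+2%:R by rewrite -natrM mulnSr addn2.
rewrite e1 e2 => h.
have [x0 hy] := inv_between _ _ h isT.
have [fl [cl ni]] := fl_between _ _ _ hy.
rewrite /T /d1 (gt_eqF x0) (negbTE ni) fl cl /= oddM /=.
split=> //.
by rewrite mulnSr addn2.
Qed.

Lemma PR (k : nat) (x : R) : (0 < k)%N -> (2*k%:R + 1)^-1 < x < (2*k%:R)^-1 ->
  T R x = 1 - 2*k%:R * x /\ d1 R x = (2*k)%:Z.
Proof.
move=> k0.
have e1 : (2 * k%:R + 1 : R) = (2*k).+1%:R by rewrite -natrM -natr1.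
have e2 : (2 * k%:R : R) = (2*k)%:R by rewrite -natrM.
rewrite e1 e2 => h.
have [x0 hy] := inv_between _ _ h ltac:(by rewrite muln_gt0 k0).
have [fl [cl ni]] := fl_between _ _ _ hy.
rewrite /T /d1 (gt_eqF x0) (negbTE ni) fl cl /= oddM /=.
by [].
Qed.

Lemma inv_between2 (n : nat) (x : R) : (0 < n)%N -> 0 < x -> n%:R < x^-1 < n.+1%:R ->
  (n.+1%:R)^-1 < x < (n%:R)^-1.
Proof.
move=> n0 x0 /andP[h1 h2].
rewrite -[x]invrK !ltf_pV2 ?posrE ?invr_gt0 ?ltr0n //.
by rewrite h1 h2.
Qed.

Lemma PE (x : R) : Omega R x -> exists k : nat, (0 < k)%N /\
  ((2*k%:R)^-1 < x < (2*k%:R - 1)^-1 \/ (2*k%:R + 1)^-1 < x < (2*k%:R)^-1).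
Proof.
move=> [/andP[x0 x1] irr].
have y1 : 1 < x^-1 by rewrite invf_gt1.
have fpos : (0 < Num.floor x^-1)%R by rewrite floor_gt0 ltW.
have ni : ~~ (x^-1 \is a Num.int).
  apply/negP => /intrP [z zE]; apply: irr; exists (z%:~R^-1).
  by rewrite fmorphV /= ratr_int -zE invrK.
have h1 : (Num.floor x^-1)%:~R < x^-1.
  rewrite lt_neqAle floor_le andbT; apply/negP => /eqP e.
  by move: ni; rewrite -e intr_int.
have h2 := floorD1_gt x^-1.
case E : (Num.floor x^-1) fpos h1 h2 => [p|p] // p0 h1 h2.
have p0' : (0 < p)%N by [].
have hp : p%:R < x^-1 < p.+1%:R.
  rewrite h1 /=; move: h2; have -> : (p%:Z + 1 = p.+1%:Z) by rewrite -addn1 PoszD.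
  by [].
have H := inv_between2 _ _ p0' x0 hp.
case: (boolP (odd p)) => op.
- exists (uphalf p); split; first by move: p0'; case: (p).
  left.
  have e : (2 * (uphalf p)%:R : R) = p.+1%:R.
    by rewrite -natrM mul2n odd_uphalfK.
  by rewrite e; have -> : (p.+1%:R - 1 : R) = p%:R by rewrite -natr1 addrK.
- exists p./2; split.
    by move: op p0'; case: (p) => [|[|q]].
  right.
  have e : (2 * (p./2)%:R : R) = p%:R.
    by rewrite -natrM mul2n -[in RHS](odd_double_half p) (negbTE op).
  by rewrite e natr1.
Qed.
End S.

Section S.
Variable R : realType.
Local Notation mu := (@lebesgue_measure R).

Lemma aff_mfun (s t : R) : measurable_fun setT (fun x : R => s * x + t).
Proof.
apply: (measurable_realfun.measurable_funD (f := fun x => s * x) (g := fun _ => t)).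
  exact: (measurable_realfun.measurable_funM (f := fun _ => s) (g := id)).
exact: measurable_cst.
Qed.

Lemma aff_pre_oc (s t a b : R) : 0 < s ->
  (fun x => s * x + t) @^-1` `]a, b]%classic = `](a - t) / s, (b - t) / s]%classic.
Proof.
move=> s0; apply/seteqP; split => x /=; rewrite !in_itv /=.
  by rewrite ltr_pdivrMr // ler_pdivlMr // [x * s]mulrC ltrBlDr lerBrDr.
by rewrite ltr_pdivrMr // ler_pdivlMr // [x * s]mulrC ltrBlDr lerBrDr.
Qed.

Lemma aff_pre_oc_neg (s t a b : R) : s < 0 ->
  (fun x => s * x + t) @^-1` `]a, b]%classic = `[(b - t) / s, (a - t) / s[%classic.
Proof.
move=> s0; apply/seteqP; split => x /=; rewrite !in_itv /=.
  by rewrite ltr_ndivlMr // ler_ndivrMr // [x * s]mulrC ltrBlDr lerBrDr andbC.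
by rewrite ltr_ndivlMr // ler_ndivrMr // [x * s]mulrC ltrBlDr lerBrDr andbC.
Qed.

End S.
Section S2.
Variable R : realType.
Local Notation mu := (@lebesgue_measure R).
Variables (s t : R).
Definition affpf (A : set (measurableTypeR R)) : \bar R :=
  mu ((fun x => (s * x + t)%R) @^-1` A).
Let mf := aff_mfun R s t.
Let affpf0 : affpf set0 = 0%E.
Proof. by rewrite /affpf preimage_set0 measure0. Qed.
Let affpf_ge0 A : (0 <= affpf A)%E.
Proof. exact: measure_ge0. Qed.
Let affpf_sigma_additive : semi_sigma_additive affpf.
Proof.
move=> F mF tF mUF; rewrite /affpf preimage_bigcup.
apply: measure_semi_sigma_additive.
- by move=> n; have := mf measurableT _ (mF n); rewrite setTI.
- apply/trivIsetP => /= i j _ _ ij; rewrite -preimage_setI.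
  by move/trivIsetP : tF => /(_ _ _ _ _ ij) ->//; rewrite preimage_set0.
- by rewrite -preimage_bigcup; have := mf measurableT _ mUF; rewrite setTI.
Qed.
HB.instance Definition _ := isMeasure.Build _ _ _
  affpf affpf0 affpf_ge0 affpf_sigma_additive.
End S2.

Section S3.
Variable R : realType.
Local Notation mu := (@lebesgue_measure R).
Lemma AFF (s t : R) (A : set R) : s != 0 -> measurable A ->
  (mu ((fun x => (s * x + t)%R) @^-1` A) = ((`|s|)^-1)%:E * mu A)%E.
Proof.
move=> s0 mA.
have := @lebesgue_measure_unique R (mscale (`|s|)%:nng (affpf R s t)).
move=> /(_ erefl) h.
rewrite (h _ _ mA) /mscale /affpf /=; last first.
  move=> _ [[a b] _ <-] /=; rewrite /mscale /= /affpf.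
  case: (ltgtP s 0) s0 => // sgn _.
    rewrite aff_pre_oc_neg //.
    rewrite (@lebesgue_measure_itv R `[_, _[) (@lebesgue_measure_itv R `]_, _]) /=.
    rewrite !lte_fin.
    have -> : ((b - t) / s < (a - t) / s) = (a < b) by rewrite ltr_nM2r ?invr_lt0 // ltrD2r.
    case: ifP => _; rewrite ?mule0 // -!EFinD -EFinM; congr (_%:E).
    rewrite ltr0_norm //; field; by rewrite lt_eqF.
  rewrite (aff_pre_oc R s t a b sgn).
  rewrite (@lebesgue_measure_itv R `]_, _]) (@lebesgue_measure_itv R `]_, _]) /=.
  rewrite !lte_fin.
  have -> : ((a - t) / s < (b - t) / s) = (a < b) by rewrite ltr_pM2r ?invr_gt0 // ltrD2r.
  case: ifP => _; rewrite ?mule0 // -!EFinD -EFinM; congr (_%:E).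
  rewrite gtr0_norm //; field; by rewrite gt_eqF.
by rewrite muleA -EFinM mulVf ?normr_eq0 // mul1e.
Qed.
End S3.

Section S.
Variable R : realType.
Local Notation mu := (@lebesgue_measure R).

Lemma rat_meas : measurable (range (@ratr R)).
Proof.
rewrite (_ : range _ = \bigcup_(q : rat) [set ratr q]).
  by apply: bigcupT_measurable_rat => q; exact: measurable_set1.
by apply/seteqP; split=> [_ [q _ <-]|_ [q _ ->]]; exists q.
Qed.

Lemma Omega_eq : Omega R = (`]0, 1[%classic : set R) `&` ~` range (@ratr R).
Proof.
apply/seteqP; split => x.
- move=> [h irr]; split; first by rewrite /= in_itv /=.
  by move=> [q _ qx]; apply: irr; exists q.
- move=> [h nr]; split; first by move: h; rewrite /= in_itv.
  by move=> [q qx]; apply: nr; exists q.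
Qed.

Lemma Omega_meas : measurable (Omega R).
Proof.
rewrite Omega_eq; apply: measurableI; first exact: measurable_itv.
exact: measurableC rat_meas.
Qed.

Lemma mu_Omega (A : set R) : measurable A -> A `<=` (`]0, 1[%classic : set R) ->
  mu (A `&` Omega R) = mu A.
Proof.
move=> mA A01.
have e : A = (A `&` Omega R) `|` (A `&` range (@ratr R)).
  apply/seteqP; split => x; last by move=> [[]|[]].
  move=> Ax; case: (pselect (range (@ratr R) x)) => h; first by right.
  left; split => //; rewrite Omega_eq; split => //; exact: A01.
rewrite [in RHS]e measureU0 //.
- by apply: measurableI => //; exact: Omega_meas.
- by apply: measurableI => //; exact: rat_meas.
apply/eqP; rewrite eq_le measure_ge0 andbT -(lebesgue_measure_rat R).
apply: le_measure; rewrite ?inE //.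
- by apply: measurableI => //; exact: rat_meas.
- exact: rat_meas.

Qed.

Lemma mu_fin (A : set R) : measurable A -> A `<=` (`]0, 1[%classic : set R) -> (mu A \is a fin_num)%E.
Proof.
move=> mA A01; rewrite ge0_fin_numE ?measure_ge0 //.
apply: (@le_lt_trans _ _ (mu `]0, 1[%classic)).
  by apply: le_measure; rewrite ?inE //; exact: measurable_itv.
by rewrite (@lebesgue_measure_itv R `]_, _[) /= lte_fin ltr01 ltry.
Qed.

End S.

Section S.
Variable R : realType.
Local Notation mu := (@lebesgue_measure R).

Definition Ik (k : nat) : set R := `](2*k%:R+1)^-1, (2*k%:R-1)^-1[%classic.
Definition J k := Omega R `&` Ik k.
Definition pJ (k : nat) : R := 2 / ((2*k%:R-1)*(2*k%:R+1)).

Lemma invltE (c x : R) : 0 < c -> (c^-1 < x) = (1 < c * x).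
Proof. by move=> c0; rewrite -[c^-1]mulr1 ltr_pdivrMl. Qed.
Lemma ltinvE (c x : R) : 0 < c -> (x < c^-1) = (c * x < 1).
Proof. by move=> c0; rewrite -[c^-1]mulr1 ltr_pdivlMl. Qed.

Lemma K1 k : (0 < k)%N -> 1 <= k%:R :> R.
Proof. by move=> k0; rewrite ler1n. Qed.

Lemma Ik_iff k x : (0 < k)%N ->
  Ik k x <-> (1 < (2*k%:R+1)*x /\ (2*k%:R-1)*x < 1).
Proof.
move=> /K1 k1; rewrite /Ik /= in_itv /= invltE ?ltinvE; try lra.
Qed.

Lemma lt_aux k k' (y : R) : (2*k'%:R-1)*y < 1 -> 1 < (2*k%:R+1)*y -> (k' <= k)%N.
Proof.
move=> h1 h2.
have k0 : 0 <= k%:R :> R by [].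
have k0' : 0 <= k'%:R :> R by [].
have : k'%:R < k.+1%:R :> R by rewrite -natr1; nra.
by rewrite ltr_nat.
Qed.

Lemma Ik_uniq k k' x : (0 < k)%N -> (0 < k')%N -> Ik k x -> Ik k' x -> k = k'.
Proof.
move=> k0 k0' /(Ik_iff _ _ k0) [a1 a2] /(Ik_iff _ _ k0') [b1 b2].
apply/eqP; rewrite eqn_leq; apply/andP; split; apply: lt_aux; eassumption.
Qed.

Lemma L_Ik k (x : R) : (0 < k)%N -> (2*k%:R)^-1 < x < (2*k%:R-1)^-1 -> Ik k x.
Proof.
move=> k0 /andP[h1 h2]; have k1 := K1 _ k0.
rewrite invltE ?ltinvE in h1 h2; try lra.
apply/Ik_iff => //; split; nra.
Qed.

Lemma R_Ik k (x : R) : (0 < k)%N -> (2*k%:R+1)^-1 < x < (2*k%:R)^-1 -> Ik k x.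
Proof.
move=> k0 /andP[h1 h2]; have k1 := K1 _ k0.
rewrite invltE ?ltinvE in h1 h2; try lra.
apply/Ik_iff => //; split; nra.
Qed.

Lemma classify x : Omega R x -> exists k, (0 < k)%N /\ Ik k x /\ d1 R x = (2*k)%:Z.
Proof.
move=> ox; have [k [k0 [h|h]]] := PE _ _ ox; exists k; split => //.
  by split; [exact: L_Ik | exact: (PL _ _ _ k0 h).2].
by split; [exact: R_Ik | exact: (PR _ _ _ k0 h).2].
Qed.

Lemma d1_J k x : (0 < k)%N -> Omega R x -> (d1 R x = (2*k)%:Z <-> Ik k x).
Proof.
move=> k0 ox; have [k' [k0' [ik e]]] := classify _ ox; rewrite e; split.
  by case=> /eqP; rewrite eqn_pmul2l // => /eqP <-.
by move=> ik2; rewrite (Ik_uniq _ _ _ k0' k0 ik ik2).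
Qed.

Lemma irr_aff (a b : rat) (x : R) : a != 0 -> Defs.irrational x -> Defs.irrational (ratr a * x + ratr b).
Proof.
move=> a0; rewrite /Defs.irrational => irr [q qE]; apply: irr; exists ((q - b) / a).
rewrite fmorph_div /= rmorphB /= -qE addrK mulrC mulKf //.
by rewrite fmorph_eq0.
Qed.

Lemma ratr2k (k : nat) : ratr (2 * k%:R) = 2 * k%:R :> R.
Proof. by rewrite -natrM ratr_nat natrM. Qed.

End S.

Section S.
Variable R : realType.
Local Notation mu := (@lebesgue_measure R).
Local Notation Ik := (Ik R).
Local Notation J := (J R).

Lemma Ik_01 k x : (0 < k)%N -> Ik k x -> 0 < x < 1.
Proof.
move=> k0 /(Ik_iff _ _ _ k0) [h1 h2]; have k1 := K1 R _ k0.
apply/andP; split; nra.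
Qed.

Lemma Ik_meas k : measurable (Ik k).
Proof. exact: measurable_itv. Qed.

Lemma J_meas k : measurable (J k).
Proof. apply: measurableI; [exact: Omega_meas | exact: Ik_meas]. Qed.

Lemma mu_J k : (0 < k)%N -> mu (J k) = (pJ R k)%:E.
Proof.
move=> k0; have k1 := K1 R _ k0.
rewrite /J setIC mu_Omega; last 2 first.
- exact: Ik_meas.
- by move=> x /(Ik_01 _ _ k0) h; rewrite /= in_itv /=.
rewrite /Ik (@lebesgue_measure_itv R `]_, _[) /= lte_fin.
have -> : (2 * k%:R + 1)^-1 < (2 * k%:R - 1)^-1 :> R.
  by rewrite ltf_pV2 ?posrE; lra.
rewrite -EFinD /pJ; congr (_%:E); field.
by apply/andP; split; apply/lt0r_neq0; lra.
Qed.

Lemma T_Omega x : Omega R x -> Omega R (T R x).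
Proof.
move=> ox; have [k [k0 [h|h]]] := PE _ _ ox; have k1 := K1 R _ k0.
- have [-> _] := PL _ _ _ k0 h.
  move: ox => [_ irr]; move: h => /andP[h1 h2].
  rewrite invltE ?ltinvE in h1 h2; try lra.
  split; first by apply/andP; split; nra.
  have -> : 2 * k%:R * x - 1 = ratr (2 * k%:R) * x + ratr (-1).
    by rewrite ratr2k rmorphN rmorph1.
  apply: irr_aff => //; by rewrite mulf_neq0 // pnatr_eq0 -lt0n.
- have [-> _] := PR _ _ _ k0 h.
  move: ox => [_ irr]; move: h => /andP[h1 h2].
  rewrite invltE ?ltinvE in h1 h2; try lra.
  split; first by apply/andP; split; nra.
  have -> : 1 - 2 * k%:R * x = ratr (- (2 * k%:R)) * x + ratr 1.
    by rewrite rmorphN /= ratr2k rmorph1 mulNr addrC.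
  apply: irr_aff => //; by rewrite oppr_eq0 mulf_neq0 // pnatr_eq0 -lt0n.
Qed.

Lemma T_bound k x : (0 < k)%N -> J k x -> 0 < T R x /\ (2*k%:R-1) * T R x < 1.
Proof.
move=> k0 [ox ik]; have k1 := K1 R _ k0.
have [k' [k0' [h|h]]] := PE _ _ ox.
- have e : k' = k by apply: (Ik_uniq R _ _ x k0' k0) => //; exact: L_Ik.
  subst k'; have [-> _] := PL _ _ _ k0 h.
  move: h => /andP[h1 h2].
  rewrite invltE ?ltinvE in h1 h2; try lra.
  split; nra.
- have e : k' = k by apply: (Ik_uniq R _ _ x k0' k0) => //; exact: R_Ik.
  subst k'; have [-> _] := PR _ _ _ k0 h.
  move: h => /andP[h1 h2].
  rewrite invltE ?ltinvE in h1 h2; try lra.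
  split; nra.
Qed.

End S.

Section S.
Variable R : realType.
Local Notation mu := (@lebesgue_measure R).
Local Notation Ik := (Ik R).
Local Notation J := (J R).

Definition gam (k l : nat) : R := if k == l then (2*k%:R)^-1 else k%:R^-1.

Lemma irr_back (c d : rat) (x : R) :
  Defs.irrational (ratr c * x + ratr d) -> Defs.irrational x.
Proof.
rewrite /Defs.irrational => irr [q qE]; apply: irr; exists (c * q + d).
by rewrite rmorphD rmorphM /= qE.
Qed.

Lemma fx_eq k (x : R) : 2 * k%:R * x - 1 = ratr (2 * k%:R) * x + ratr (-1).
Proof. by rewrite ratr2k rmorphN rmorph1. Qed.

Lemma gx_eq k (x : R) : - (2 * k%:R) * x + 1 = ratr (- (2 * k%:R)) * x + ratr 1.
Proof. by rewrite rmorphN /= ratr2k rmorph1. Qed.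

Lemma OS_set k l (B : set R) : (0 < k)%N -> (k <= l)%N -> B `<=` J l ->
  J k `&` T R @^-1` B =
  (fun x : R => 2 * k%:R * x - 1) @^-1` B `|`
  (if (k < l)%N then (fun x : R => - (2 * k%:R) * x + 1) @^-1` B else set0).
Proof.
move=> k0 kl BJ; have k1 := K1 R _ k0.
have l0 : (0 < l)%N by apply: leq_trans kl.
have l1 := K1 R _ l0.
have kl' : k%:R <= l%:R :> R by rewrite ler_nat.
apply/seteqP; split => x.
- move=> [[ox ik] /= TB].
  have [k' [k0' [h|h]]] := PE _ _ ox.
  + have e : k' = k by apply: (Ik_uniq R _ _ x k0' k0) => //; exact: L_Ik.
    subst k'; have [Te _] := PL _ _ _ k0 h.
    by left; rewrite /= -Te.
  + have e : k' = k by apply: (Ik_uniq R _ _ x k0' k0) => //; exact: R_Ik.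
    subst k'; have [Te _] := PR _ _ _ k0 h.
    have [_ /(Ik_iff _ _ _ l0) [i1 i2]] := BJ _ TB.
    move: h => /andP[h1 h2].
    rewrite invltE ?ltinvE in h1 h2; try lra.
    have hk : (k.+1 <= l)%N.
      apply: (lt_aux _ _ _ (T R x)) => //.
      rewrite -natr1 Te; nra.
    right; rewrite hk /=.
    by rewrite mulNr addrC -Te.
- case=> /= TB.
  + have [[_ irr] /(Ik_iff _ _ _ l0) [i1 i2]] := BJ _ TB.
    have h1 : 1 < 2 * k%:R * x.
      have [[/andP[] + _] _] := BJ _ TB; lra.
    have h2 : (2 * k%:R - 1) * x < 1 by nra.
    have hx : (2 * k%:R)^-1 < x < (2 * k%:R - 1)^-1.
      by rewrite invltE ?ltinvE ?h1 ?h2; lra.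
    have [Te _] := PL _ _ _ k0 hx.
    split; last by rewrite /= Te.
    split; last by apply/Ik_iff => //; split; nra.
    split; first by apply/andP; split; nra.
    by apply: (irr_back (2 * k%:R) (-1)); rewrite -fx_eq.
  + move: TB; case: ifP => // hk TB.
    have kl2 : k%:R + 1 <= l%:R :> R by rewrite natr1 ler_nat.
    have [[_ irr] /(Ik_iff _ _ _ l0) [i1 i2]] := BJ _ TB.
    have h1 : 2 * k%:R * x < 1.
      have [[/andP[] + _] _] := BJ _ TB; lra.
    have h2 : 1 < (2 * k%:R + 1) * x by nra.
    have hx : (2 * k%:R + 1)^-1 < x < (2 * k%:R)^-1.
      by rewrite invltE ?ltinvE ?h1 ?h2; lra.
    have [Te _] := PR _ _ _ k0 hx.
    split; last by rewrite /= Te; move: TB => /=; rewrite mulNr addrC.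
    split; last by apply/Ik_iff => //; split; nra.
    split; first by apply/andP; split; nra.
    by apply: (irr_back (- (2 * k%:R)) 1); rewrite -gx_eq.
Qed.

End S.
Section S2.
Variable R : realType.
Local Notation mu := (@lebesgue_measure R).
Local Notation Ik := (Ik R).
Local Notation J := (J R).

Lemma aff_meas (s t : R) (B : set R) : measurable B ->
  measurable ((fun x => s * x + t) @^-1` B).
Proof. by move=> mB; have := aff_mfun R s t measurableT _ mB; rewrite setTI. Qed.

Lemma J_sub01 l (B : set R) : (0 < l)%N -> B `<=` J l -> B `<=` `]0, 1[%classic.
Proof.
by move=> l0 BJ x /BJ [_ /(Ik_01 _ _ _ l0) h]; rewrite /= in_itv.
Qed.

Lemma muU (A B : set R) : measurable A -> measurable B -> A `&` B = set0 ->
  mu (A `|` B) = (mu A + mu B)%E.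
Proof. by move=> mA mB AB; rewrite measureU. Qed.

Lemma OS k l (B : set R) : (0 < k)%N -> (k <= l)%N -> measurable B -> B `<=` J l ->
  mu (J k `&` T R @^-1` B) = ((gam R k l)%:E * mu B)%E.
Proof.
move=> k0 kl mB BJ; have k1 := K1 R _ k0.
have l0 : (0 < l)%N by apply: leq_trans kl.
have fB := mu_fin R _ mB (J_sub01 _ _ l0 BJ).
have K0 : 2 * k%:R != 0 :> R by apply/lt0r_neq0; lra.
rewrite (OS_set R k l B k0 kl BJ) /gam; case: ifP => kl'.
- rewrite muU //; last 3 first.
  + exact: aff_meas.
  + exact: aff_meas.
  + apply/seteqP; split => // x [/= h1 h2].
    have [[/andP[a _] _] _] := BJ _ h1.
    have [[/andP[b _] _] _] := BJ _ h2.
    lra.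
  rewrite (AFF R (2*k%:R) (-1) B) ?(AFF R (-(2*k%:R)) 1 B) // ?oppr_eq0 // normrN gtr0_norm; last by lra.
  rewrite (ltn_eqF kl') -(fineK fB) -!EFinM -EFinD; congr (_%:E).
  field; apply/lt0r_neq0; lra.
- have e : k = l by apply/eqP; rewrite eqn_leq kl leqNgt kl'.
  subst l; rewrite setU0 (AFF R (2*k%:R) (-1) B) // gtr0_norm; last by lra.
  by rewrite eqxx.
Qed.

End S2.

Section S.
Variable R : realType.
Local Notation mu := (@lebesgue_measure R).
Local Notation Ik := (Ik R).
Local Notation J := (J R).

Definition Tn (n : nat) (x : R) := iter n (T R) x.

Lemma Tn_Omega n x : Omega R x -> Omega R (Tn n x).
Proof. by move=> ox; elim: n => //= n IH; exact: T_Omega. Qed.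

Definition Lk (k : nat) : set R := `](2*k%:R)^-1, (2*k%:R-1)^-1[%classic.
Definition Rk (k : nat) : set R := `](2*k%:R+1)^-1, (2*k%:R)^-1[%classic.

Lemma M1 (B : set R) : measurable B -> measurable (Omega R `&` T R @^-1` B).
Proof.
move=> mB.
rewrite (_ : _ `&` _ = \bigcup_k (if (0 < k)%N then
   (Omega R `&` Lk k `&` (fun x : R => 2 * k%:R * x - 1) @^-1` B) `|`
   (Omega R `&` Rk k `&` (fun x : R => - (2 * k%:R) * x + 1) @^-1` B) else set0)).
  apply: bigcupT_measurable => k; case: ifP => // _.
  apply: measurableU; apply: measurableI; try exact: aff_meas.
    by apply: measurableI; [exact: Omega_meas | exact: measurable_itv].
  by apply: measurableI; [exact: Omega_meas | exact: measurable_itv].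
apply/seteqP; split => x.
- move=> [ox TB]; have [k [k0 [h|h]]] := PE _ _ ox; exists k => //; rewrite k0.
    left; split; first by split => //; rewrite /Lk /= in_itv.
    by rewrite /= -(PL _ _ _ k0 h).1.
  right; split; first by split => //; rewrite /Rk /= in_itv.
  by rewrite /= mulNr addrC -(PR _ _ _ k0 h).1.
- move=> [k _]; case: ifP => // k0 [[[ox h] fB]|[[ox h] gB]]; split => //=.
    by rewrite (PL _ _ _ k0 h).1.
  by rewrite (PR _ _ _ k0 h).1 -mulNr addrC.
Qed.

Lemma DA_meas (A : pred int) : measurable [set y : R | Omega R y /\ A (d1 R y)].
Proof.
rewrite (_ : [set y | _] = \bigcup_k (if (0 < k)%N && A (2 * k)%:Z then J k else set0)).
  by apply: bigcupT_measurable => k; case: ifP => // _; exact: J_meas.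
apply/seteqP; split => y.
- move=> [oy Ay]; have [k [k0 [ik e]]] := classify _ _ oy.
  by exists k => //; rewrite k0 -e Ay.
- move=> [k _]; case: ifP => // /andP[k0 Ak] [oy ik]; split => //.
  by rewrite (proj2 (d1_J _ _ _ k0 oy) ik).
Qed.

Definition good n (E : set R) (w : nat -> R) :=
  [/\ E `<=` Omega R,
      (forall B, measurable B -> measurable (E `&` Tn n @^-1` B)) &
      (forall k B, (0 < k)%N -> measurable B -> B `<=` J k ->
         mu (E `&` Tn n @^-1` B) = ((w k)%:E * mu B)%E)].

Lemma good0 : good 0 (Omega R) (fun _ => 1).
Proof.
split => //.
- by move=> B mB; apply: measurableI => //; exact: Omega_meas.
- move=> k B k0 mB BJ; rewrite mul1e; congr (mu _).
  by apply/seteqP; split => [x []//|x Bx]; split => //; have [] := BJ _ Bx.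
Qed.

Lemma restr n E w (A : pred int) : good n E w ->
  good n (E `&` [set x | A (d1 R (Tn n x))]) (fun k => if A (2 * k)%:Z then w k else 0).
Proof.
move=> [EO Em Emu]; split.
- by move=> x [/EO].
- move=> B mB.
  rewrite (_ : _ `&` _ = E `&` Tn n @^-1` (B `&` [set y | Omega R y /\ A (d1 R y)])).
    by apply: Em; apply: measurableI => //; exact: DA_meas.
  apply/seteqP; split => x.
    by move=> [[Ex Ax] Bx]; split => //; split => //; split => //; apply: Tn_Omega; exact: EO.
  by move=> [Ex [Bx [_ Ax]]].
- move=> k B k0 mB BJ.
  have key : forall x, E x -> B (Tn n x) -> d1 R (Tn n x) = (2 * k)%:Z.
    move=> x Ex Bx; have [oy iy] := BJ _ Bx; exact: (proj2 (d1_J _ _ _ k0 oy) iy).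
  case: ifP => Ak.
    rewrite -Emu //; congr (mu _); apply/seteqP; split => x; first by move=> [[]].
    by move=> [Ex Bx]; split => //; split => //=; rewrite key.
  rewrite mul0e (_ : _ `&` _ = set0) ?measure0 //.
  apply/seteqP; split => x // [[Ex /= Ax] Bx]; move: Ax; by rewrite key // Ak.
Qed.

End S.

Section S.
Variable R : realType.
Local Notation mu := (@lebesgue_measure R).
Local Notation Ik := (Ik R).
Local Notation J := (J R).
Local Notation Tn := (Tn R).
Local Notation good := (good R).

Lemma JT_meas k (B : set R) : measurable B -> measurable (J k `&` T R @^-1` B).
Proof.
move=> mB; rewrite (_ : _ `&` _ = J k `&` (Omega R `&` T R @^-1` B)).
  by apply: measurableI; [exact: J_meas | exact: M1].
by apply/seteqP; split => x; [move=> [[ox ik] TB] | move=> [jx [_ TB]]].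
Qed.

Definition liftw (w : nat -> R) (l : nat) : R :=
  \sum_(k < l.+1) (if (0 < k)%N then w k * gam R k l else 0).

Lemma liftg n E w : good n E w -> good n.+1 E (liftw w).
Proof.
move=> [EO Em Emu]; split => //.
- move=> B mB.
  rewrite (_ : E `&` Tn n.+1 @^-1` B = E `&` Tn n @^-1` (Omega R `&` T R @^-1` B)).
    exact: Em (M1 _ _ mB).
  apply/seteqP; split => x; last by move=> [Ex [_ TB]].
  move=> [Ex TB]; split => //; split => //; apply: Tn_Omega; exact: EO.
- move=> l B l0 mB BJ.
  pose F := fun k => if (0 < k)%N then E `&` Tn n @^-1` (J k `&` T R @^-1` B) else set0.
  have eqF : E `&` Tn n.+1 @^-1` B = \big[setU/set0]_(k < l.+1) F k.
    rewrite -bigcup_mkord; apply/seteqP; split => x.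
    + move=> [Ex TB]; have oy := Tn_Omega _ n _ (EO _ Ex).
      have [k [k0 [ik _]]] := classify _ _ oy.
      have [_ b2] := T_bound _ _ _ k0 (conj oy ik).
      have [_ /(Ik_iff _ _ _ l0) [i1 _]] := BJ _ TB.
      have kl : (k <= l)%N by apply: (lt_aux _ _ _ _ b2 i1).
      by exists k => //=; rewrite /F k0.
    + move=> [k _]; rewrite /F; case: ifP => // k0 [Ex [_ TB]]; by split.
  have mF : forall k, measurable (F k).
    by move=> k; rewrite /F; case: ifP => // _; apply: Em; exact: JT_meas.
  have tF : trivIset setT F.
    apply/trivIsetP => i j _ _ ij; rewrite /F.
    case: ifP => i0; last by rewrite set0I.
    case: ifP => j0; last by rewrite setI0.
    apply/seteqP; split => // x [[Ex [[_ ii] _]] [_ [[_ ij'] _]]].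
    by move: ij; rewrite (Ik_uniq _ _ _ _ i0 j0 ii ij') eqxx.
  have fB := mu_fin R _ mB (J_sub01 _ _ _ l0 BJ).
  rewrite eqF (measure_bigsetU mu mF tF).
  rewrite (eq_bigr (fun k : 'I_l.+1 => ((if (0 < k)%N then w k * gam R k l else 0)%:E * mu B)%E)).
    rewrite -(fineK fB) /liftw.
    under eq_bigr do rewrite -EFinM.
    by rewrite sumEFin -EFinM mulr_suml.
  move=> k _; rewrite /F; case: ifP => k0; last by rewrite measure0 mul0e.
  apply: (etrans (Emu k _ k0 (JT_meas _ _ mB) _)); first by move=> x [].
  rewrite (OS R k l B k0 _ mB BJ); last by rewrite -ltnS.
  by rewrite muleA -EFinM.
Qed.

End S.

Section S.
Variable R : realType.
Local Notation mu := (@lebesgue_measure R).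
Local Notation Ik := (Ik R).
Local Notation J := (J R).
Local Notation Tn := (Tn R).
Local Notation good := (good R).

Lemma pJ_gt0 k : (0 < k)%N -> 0 < pJ R k.
Proof.
move=> k0; have k1 := K1 R _ k0; rewrite /pJ.
apply: divr_gt0; first by [].
apply: mulr_gt0; lra.
Qed.

Lemma good_meas n E w : good n E w -> measurable E.
Proof.
by move=> [_ Em _]; have := Em _ measurableT; rewrite preimage_setT setIT.
Qed.

Lemma good_sub n E w k0 : good n E w -> (0 < k0)%N ->
  E `<=` [set x | d1 R (Tn n x) = (2 * k0)%:Z] ->
  (mu E = (w k0)%:E * mu (J k0))%E /\ (forall k, (0 < k)%N -> k != k0 -> w k = 0).
Proof.
move=> [EO Em Emu] k00 Ed; split.
  apply: (etrans _ (Emu k0 _ k00 (J_meas _ _) (@subset_refl _ _))).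
  congr (mu _); apply/seteqP; split => [x Ex|x []//]; split => //.
  have oy := Tn_Omega _ n _ (EO _ Ex); split => //.
  by apply/(d1_J _ _ _ k00 oy); exact: Ed.
move=> k k1 kk0.
have := Emu k _ k1 (J_meas _ _) (@subset_refl _ _).
rewrite (_ : E `&` _ = set0) ?measure0.
  rewrite mu_J // -EFinM => /esym/eqP; rewrite eqe mulf_eq0 => /orP[/eqP //|].
  by rewrite gt_eqF // pJ_gt0.
apply/seteqP; split => // x [Ex [oy ik]].
move: (Ed _ Ex) => /=; rewrite (proj2 (d1_J _ _ _ k1 oy) ik) => -[] /eqP.
by rewrite eqn_pmul2l // (negbTE kk0).
Qed.

Definition tau (k0 : nat) (j : int) : R :=
  match j with
  | Posz m => if ~~ odd m && (k0 <= m./2)%N then gam R k0 m./2 * pJ R m./2 / pJ R k0 else 0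
  | Negz _ => 0
  end.

Lemma liftw_single (w : nat -> R) k0 l : (0 < k0)%N ->
  (forall k, (0 < k)%N -> k != k0 -> w k = 0) ->
  liftw R w l = if (k0 <= l)%N then w k0 * gam R k0 l else 0.
Proof.
move=> k00 wz; rewrite /liftw; case: ifP => kl.
  have k0l : (k0 < l.+1)%N by rewrite ltnS.
  rewrite (bigD1 (Ordinal k0l)) //= k00 big1 ?addr0 // => i /eqP ne.
  case: ifP => // i0; rewrite wz ?mul0r //; apply/eqP => e; apply: ne.
  by apply: val_inj => /=.
rewrite big1 // => i _; case: ifP => // i0; rewrite wz ?mul0r //.
by apply/eqP => e; move: (ltn_ord i); rewrite e ltnS kl.
Qed.


Lemma trans_main n E w k0 : good n E w -> (0 < k0)%N ->
  E `<=` [set x | d1 R (Tn n x) = (2 * k0)%:Z] -> 0 < fine (mu E) ->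
  forall j : int, fine (mu (E `&` [set x | d1 R (Tn n.+1 x) = j])) / fine (mu E) = tau k0 j.
Proof.
move=> gE k00 Ed pos j.
have [EO _ _] := gE.
have [muE wz] := good_sub _ _ _ _ gE k00 Ed.
have pk0 := pJ_gt0 _ k00.
have wk0 : w k0 != 0.
  apply/eqP => w0; move: pos; rewrite muE mu_J // w0 -EFinM mul0r /=.
  by rewrite ltxx.
have [[l [l0 ->]]|nj] := pselect (exists l, (0 < l)%N /\ j = (2 * l)%:Z).
- have gE' := restr R _ _ _ (fun z => z == (2 * l)%:Z) (liftg R _ _ _ gE).
  have eE : E `&` [set x | d1 R (Tn n.+1 x) = (2 * l)%:Z] =
            E `&` [set x | (fun z => z == (2 * l)%:Z) (d1 R (Tn n.+1 x))].
    by apply/seteqP; split => x [Ex /= /eqP h].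
  rewrite eE.
  have [muE' _] := good_sub _ _ _ _ gE' l0 (fun x => fun h => (eqP (proj2 h))).
  rewrite muE' muE !mu_J // eqxx (liftw_single _ _ _ k00 wz) /= /tau.
  have -> : odd (2 * l) = false by rewrite oddM.
  have -> : (2 * l)./2 = l by rewrite mul2n doubleK.
  case: ifP => kl /=; last by rewrite !mul0r.
  have pl := pJ_gt0 _ l0.
  field; apply/andP; split => //; exact: lt0r_neq0.
- rewrite (_ : E `&` _ = set0) ?measure0 /= ?mul0r.
    case: j nj => // m nj /=; case: ifP => // /andP[om km].
    exfalso; apply: nj; exists m./2; split; first exact: leq_trans k00 km.
    by congr Posz; rewrite -[LHS](odd_double_half m) (negbTE om) mul2n.
  apply/seteqP; split => // x [Ex /= dj].
  have oy := Tn_Omega _ n.+1 _ (EO _ Ex).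
  have [k [k1 [_ e]]] := classify _ _ oy.
  by apply: nj; exists k; rewrite -dj e.
Qed.

End S.

Section S.
Variable R : realType.
Local Notation mu := (@lebesgue_measure R).
Local Notation Ik := (Ik R).
Local Notation J := (J R).
Local Notation Tn := (Tn R).
Local Notation good := (good R).

Lemma goodOmega n : exists w, good n (Omega R) w.
Proof.
elim: n => [|n [w gw]]; first by exists (fun _ => 1); exact: good0.
by exists (liftw R w); exact: liftg.
Qed.

Lemma dEvent_eq n m : dEvent R n.+1 m =
  Omega R `&` [set x | (fun z => z == m) (d1 R (Tn n x))].
Proof. by apply/seteqP; split => x [ox /= /eqP h]. Qed.

Lemma dEvent_good n m : exists w, good n (dEvent R n.+1 m) w.
Proof.
have [w gw] := goodOmega n; rewrite dEvent_eq.
by eexists; exact: (restr R _ _ _ (fun z => z == m) gw).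
Qed.

Lemma cyl_1 a : cylinder R 1 a = Omega R `&` [set x | (fun z => z == a 1%N) (d1 R (Tn 0 x))].
Proof.
apply/seteqP; split => x.
  by move=> [ox h]; split => //=; apply/eqP; exact: (h 1%N).
move=> [ox /= /eqP h]; split => // i /andP[i1 i2].
by have -> : i = 1%N by apply/eqP; rewrite eqn_leq i1 i2.
Qed.

Lemma cyl_S p a : cylinder R p.+2 a =
  cylinder R p.+1 a `&` [set x | (fun z => z == a p.+2) (d1 R (Tn p.+1 x))].
Proof.
apply/seteqP; split => x.
  move=> [ox h]; split; last by rewrite /=; apply/eqP; apply: (h p.+2); rewrite leqnn.
  split => // i /andP[i1 i2]; apply: h; by rewrite i1 (leqW i2).
move=> [[ox h] /= /eqP e]; split => // i /andP[i1 i2].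
move: i2; rewrite leq_eqVlt => /orP[/eqP -> //|i2].
by apply: h; rewrite i1 -ltnS.
Qed.

Lemma cyl_good p a : exists w, good p (cylinder R p.+1 a) w.
Proof.
elim: p => [|p [w gw]].
  have [w gw] := goodOmega 0; rewrite cyl_1.
  by eexists; exact: (restr R _ _ _ (fun z => z == a 1%N) gw).
rewrite cyl_S; eexists; exact: (restr R _ _ _ (fun z => z == a p.+2) (liftg R _ _ _ gw)).
Qed.

Lemma good_sub01 n E w : good n E w -> E `<=` (`]0, 1[%classic : set R).
Proof.
by move=> [EO _ _] x /EO [h _]; rewrite /= in_itv.
Qed.

Lemma CP p E w v : good p E w -> E `<=` [set x | d1 R (Tn p x) = v] ->
  0 < Prob R E -> exists k0, [/\ (0 < k0)%N, v = (2 * k0)%:Z &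
    forall j, condProb R (dEvent R p.+2 j) E = tau R k0 j].
Proof.
move=> gE Ed pos.
have [EO _ _] := gE.
have [x Ex] : exists x, E x.
  apply: contrapT => ne; move: pos; rewrite /Prob (_ : E = set0) ?measure0 ?ltxx //.
  by apply/seteqP; split => // y Ey; apply: ne; exists y.
have oy := Tn_Omega _ p _ (EO _ Ex).
have [k0 [k00 [_ e]]] := classify _ _ oy.
have ev : v = (2 * k0)%:Z by rewrite -e; have := Ed _ Ex; rewrite /= => ->.
exists k0; split => // j.
rewrite /condProb.
have -> : dEvent R p.+2 j `&` E = E `&` [set x | d1 R (Tn p.+1 x) = j].
  apply/seteqP; split => y; first by move=> [[_ h] Ey].
  by move=> [Ey h]; split => //; split => //; exact: EO.
apply: (trans_main R _ _ _ _ gE k00) => //.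
by move=> y /Ed /= ->.
Qed.

Lemma tau_val k l : (0 < k)%N -> (k <= l)%N ->
  tau R k (2 * l)%:Z = (if l == k then (2 * k%:R)^-1
      else (2 * k%:R - 1) * (2 * k%:R + 1) /
           (k%:R * (2 * l%:R - 1) * (2 * l%:R + 1)) : R).
Proof.
move=> k0 kl; have k1 := K1 R _ k0.
have l0 : (0 < l)%N by apply: leq_trans kl.
have l1 := K1 R _ l0.
rewrite /tau.
have -> : odd (2 * l) = false by rewrite oddM.
have -> : (2 * l)./2 = l by rewrite mul2n doubleK.
rewrite kl /= /gam /pJ eq_sym.
case: eqP => [->|_].
  field; rewrite !lt0r_neq0 //; lra.
field; rewrite !lt0r_neq0 //; lra.
Qed.

End S.

Theorem proposition2p3 (R : realType) :
  (* the digits are random variables: the events {d_n = m} are Borel *)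
  (forall (n : nat) (m : int), measurable (dEvent R n m))
  /\
  (* initial distribution *)
  (forall k : nat, (0 < k)%N ->
     (@lebesgue_measure R (dEvent R 1 (2 * k)%:Z) =
      (2 / ((2 * k%:R - 1) * (2 * k%:R + 1)))%:E)%E)
  /\
  (* Markov property *)
  (forall (n : nat) (a : nat -> int), (1 <= n)%N ->
     0 < Prob R (cylinder R n a) ->
     condProb R (dEvent R n.+1 (a n.+1)) (cylinder R n a) =
     condProb R (dEvent R n.+1 (a n.+1)) (dEvent R n (a n)))
  /\
  (* time-homogeneity *)
  (forall (n m : nat) (i j : int), (1 <= n)%N -> (1 <= m)%N ->
     0 < Prob R (dEvent R n i) -> 0 < Prob R (dEvent R m i) ->
     condProb R (dEvent R n.+1 j) (dEvent R n i) =
     condProb R (dEvent R m.+1 j) (dEvent R m i))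
  /\
  (* one-step transition probabilities *)
  (forall (n k l : nat), (1 <= n)%N -> (0 < k)%N -> (k <= l)%N ->
     0 < Prob R (dEvent R n (2 * k)%:Z) ->
     condProb R (dEvent R n.+1 (2 * l)%:Z) (dEvent R n (2 * k)%:Z) =
     (if l == k then (2 * k%:R)^-1
      else (2 * k%:R - 1) * (2 * k%:R + 1) /
           (k%:R * (2 * l%:R - 1) * (2 * l%:R + 1)) : R)).
Proof.
split.
  move=> n m.
  have -> : dEvent R n m = dEvent R n.-1.+1 m.
    by apply/seteqP; split => x [ox h]; split.
  have [w gw] := dEvent_good R n.-1 m.
  exact: good_meas gw.
split.
  move=> k k0.
  have -> : dEvent R 1 (2 * k)%:Z = J R k.
    apply/seteqP; split => x [ox h]; split => //.
      exact: (proj1 (d1_J _ _ _ k0 ox)).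
    exact: (proj2 (d1_J _ _ _ k0 ox)).
  exact: mu_J.
split.
  move=> [//|p] a _ pos.
  have [w gw] := cyl_good R p a.
  have [w' gw'] := dEvent_good R p (a p.+1).
  have [k0 [k00 e1 h1]] := CP R _ _ _ _ gw (fun x h => (proj2 h) p.+1 (leqnn _)) pos.
  have sub : cylinder R p.+1 a `<=` dEvent R p.+1 (a p.+1).
    by move=> x [ox h]; split => //; apply: h; rewrite /=.
  have pos' : 0 < Prob R (dEvent R p.+1 (a p.+1)).
    apply: (lt_le_trans pos); rewrite /Prob; apply: fine_le.
    - exact: mu_fin R _ (good_meas R _ _ _ gw) (good_sub01 R _ _ _ gw).
    - exact: mu_fin R _ (good_meas R _ _ _ gw') (good_sub01 R _ _ _ gw').
    - apply: le_measure => //; rewrite inE; [exact: good_meas gw | exact: good_meas gw'].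
  have [k1 [k10 e2 h2]] := CP R _ _ _ _ gw' (fun x h => proj2 h) pos'.
  rewrite h1 h2; congr (tau R _ _).
  by move: e1; rewrite e2 => -[] /eqP; rewrite eqn_pmul2l // => /eqP.
split.
  move=> [//|p] [//|q] i j _ _ posn posm.
  have [w gw] := dEvent_good R p i.
  have [w' gw'] := dEvent_good R q i.
  have [k0 [k00 e1 h1]] := CP R _ _ _ _ gw (fun x h => proj2 h) posn.
  have [k1 [k10 e2 h2]] := CP R _ _ _ _ gw' (fun x h => proj2 h) posm.
  rewrite h1 h2; congr (tau R _ _).
  by move: e1; rewrite e2 => -[] /eqP; rewrite eqn_pmul2l // => /eqP.
move=> [//|p] k l _ k0 kl pos.
have [w gw] := dEvent_good R p (2 * k)%:Z.
have [k1 [k10 e1 h1]] := CP R _ _ _ _ gw (fun x h => proj2 h) pos.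
have ek : k1 = k by move: e1 => -[] /eqP; rewrite eqn_pmul2l // => /eqP.
by rewrite h1 ek tau_val.
Qed.
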